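(* Let $\varepsilon,\delta,p$ be positive constants with $\varepsilon<1/2$. Let $(V_1,V_2,V_3)$ be a triple of pairwise disjoint vertex sets in a graph such that for all $i,j$ the density of $(V_i,V_j)$ is $d_{ij}p$ with $d_{ij}\ge\delta$. Then for every $\varepsilon$-typical vertex $v\in V_1$ there exist sets $N_j''\subset N(v)\cap V_j$ for $j\in\{2,3\}$ such that (i) there are at least $(1-6\varepsilon-2\varepsilon/\delta)d_{12}d_{13}d_{23}p^3|V_2||V_3|$ edges between $N_2''$ and $N_3''$, and if $v$ is $\varepsilon$-good, then at least that many of the edges between $N_2''$ and $N_3''$ are $\varepsilon$-good; (ii) for all $j,k$ with $\{j,k\}=\{2,3\}$, no vertex of $N_j''$ has more than $(1+2\varepsilon/\delta)(1+\varepsilon)^2d_{1k}d_{23}p^2|V_k|$ neighbours in $N_k''$.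
   Context: For disjoint $X,Y$, $d(X,Y)=e(X,Y)/(|X||Y|)$; $x=(1\pm a)y$ means $x\in[(1-a)y,(1+a)y]$. A pair $(X,Y)$ is $(\varepsilon,p)$-regular if $|d(X,Y)-d(X',Y')|\le\varepsilon p$ for all $X'\subset X,Y'\subset Y$ with $|X'|\ge\varepsilon|X|,|Y'|\ge\varepsilon|Y|$. A vertex $v\in V_1$ is $\varepsilon$-typical if for $j\in\{2,3\}$, $N_j=N(v)\cap V_j$ satisfies $|N_j|=(1\pm\varepsilon)d_{1j}p|V_j|$, and there exist $N_j'\subset N_j$ with $|N_j'|\ge(1-\varepsilon)|N_j|$ such that $(N_2',N_3')$ is $(\varepsilon,p)$-regular with density $(1\pm\varepsilon)d_{23}p$. An edge between $V_2$ and $V_3$ is $\varepsilon$-good if its endpoints have at least $(1-\varepsilon)d_{12}d_{13}p^2|V_1|$ common neighbours in $V_1$. An $\varepsilon$-typical vertex $v\in V_1$ is $\varepsilon$-good if at most $\varepsilon d_{12}d_{13}d_{23}p^3|V_2||V_3|$ edges between $N(v)\cap V_2$ and $N(v)\cap V_3$ are not $\varepsilon$-good. *)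

(* Defs.v *)
From HB Require Import structures.
From mathcomp Require Import all_boot all_order all_algebra.
Set Implicit Arguments. Unset Strict Implicit. Unset Printing Implicit Defensive.
Import Order.TTheory GRing.Theory Num.Theory.
Local Open Scope ring_scope.

Section Defs.
Variables (R : realFieldType) (T : finType) (e : rel T).

Definition nbhd (v : T) : {set T} := [set u | e v u].

(* e(X,Y): number of pairs (x,y) in X x Y that are adjacent
   (= number of edges between X and Y when X, Y are disjoint) *)
Definition edges_between (X Y : {set T}) : nat :=
  #|[set xy in setX X Y | e xy.1 xy.2]|.

Definition density (X Y : {set T}) : R :=
  (edges_between X Y)%:R / (#|X| * #|Y|)%:R.

Definition approx (x a y : R) : Prop := (1 - a) * y <= x <= (1 + a) * y.

Definition regular_pair (eps p : R) (X Y : {set T}) : Prop :=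
  forall X' Y' : {set T}, X' \subset X -> Y' \subset Y ->
    eps * #|X|%:R <= #|X'|%:R -> eps * #|Y|%:R <= #|Y'|%:R ->
    `|density X Y - density X' Y'| <= eps * p.

Definition typical (eps p d12 d13 d23 : R) (V2 V3 : {set T}) (v : T) : Prop :=
  let N2 := nbhd v :&: V2 in
  let N3 := nbhd v :&: V3 in
  approx #|N2|%:R eps (d12 * p * #|V2|%:R) /\
  approx #|N3|%:R eps (d13 * p * #|V3|%:R) /\
  exists N2' N3' : {set T},
    [/\ N2' \subset N2, N3' \subset N3,
        (1 - eps) * #|N2|%:R <= #|N2'|%:R,
        (1 - eps) * #|N3|%:R <= #|N3'|%:R &
        regular_pair eps p N2' N3' /\
        approx (density N2' N3') eps (d23 * p)].

Definition good_edge (eps p d12 d13 : R) (V1 V2 V3 : {set T}) (x y : T) : bool :=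
  [&& x \in V2, y \in V3, e x y &
      (1 - eps) * d12 * d13 * p ^+ 2 * #|V1|%:R <= #|nbhd x :&: nbhd y :&: V1|%:R].

Definition good_edges_between (eps p d12 d13 : R) (V1 V2 V3 X Y : {set T}) : nat :=
  #|[set xy in setX X Y | e xy.1 xy.2 && good_edge eps p d12 d13 V1 V2 V3 xy.1 xy.2]|.

Definition good_vertex (eps p d12 d13 d23 : R) (V1 V2 V3 : {set T}) (v : T) : Prop :=
  typical eps p d12 d13 d23 V2 V3 v /\
  #|[set xy in setX (nbhd v :&: V2) (nbhd v :&: V3) |
      e xy.1 xy.2 && ~~ good_edge eps p d12 d13 V1 V2 V3 xy.1 xy.2]|%:R
    <= eps * d12 * d13 * d23 * p ^+ 3 * #|V2|%:R * #|V3|%:R.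

End Defs.
Arguments density {R T} e X Y.
Arguments approx {R} x a y.
Arguments regular_pair {R T} e eps p X Y.
Arguments typical {R T} e eps p d12 d13 d23 V2 V3 v.
Arguments good_edge {R T} e eps p d12 d13 V1 V2 V3 x y.
Arguments good_edges_between {R T} e eps p d12 d13 V1 V2 V3 X Y.
Arguments good_vertex {R T} e eps p d12 d13 d23 V1 V2 V3 v.

(* Main.v *)
Require Import Defs.
From HB Require Import structures.
From mathcomp Require Import all_boot all_order all_algebra.
From mathcomp Require Import ring lra zify.
Import Order.TTheory GRing.Theory Num.Theory.
Local Open Scope ring_scope.

Section RealFacts.
Variable R : realFieldType.
Implicit Types e r L u w x l t : R.

Lemma F1 e : 0 < e -> e <= 1/5 ->
  2 * e * (1+e)^+2 * (1+e)^+2 <= (1+e)^+2 - (1-e)^+3.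
Proof. move=> h1 h2; nra. Qed.

Lemma F2 e : 0 < e -> e <= 1/5 -> 4 * e * (1+e)^+3 <= 1 + 2 * e.
Proof. move=> h1 h2; nra. Qed.

Lemma F3 e : 0 < e -> e <= 1/5 ->
  2 * e * (1+e)^+2 + e * (1+e)^+4 * (1 - 2 * e) <= (1+e)^+2 - (1-e)^+3.
Proof. move=> h1 h2; nra. Qed.

Lemma E5ge0 e : 0 <= e -> e <= 1 -> 1 - 5 * e <= (1-e)^+5.
Proof. move=> h1 h2; nra. Qed.

End RealFacts.

Lemma F4 (R : realFieldType) (e : R) : 0 < e -> e <= 1/5 -> 3 * e * (1+e)^+2 <= 1.
Proof. move=> h1 h2; nra. Qed.

Lemma F5 (R : realFieldType) (e : R) : 0 < e -> 2 * e <= 2 * e * (1+e)^+2.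
Proof. move=> h1; nra. Qed.

Section Side.
Variable R : realFieldType.
Implicit Types e r L u w x l t : R.

Lemma eqle (a b : R) : a = b -> a <= b. Proof. by move->. Qed.

Definition Z0 e : R := (1-e)^+3 / (1+e)^+2.
Definition E5 e : R := ((1-e)^+5 - 1 + 5 * e) / 2.

Lemma G1 e : 0 < e -> e <= 1/5 -> 2 * e * (1+e)^+2 <= 1 - Z0 e.
Proof.
move=> h1 h2; have := @F1 R e h1 h2; rewrite /Z0.
have hp : 0 < (1+e)^+2 by apply: exprn_gt0; lra.
have -> : 1 - (1 - e) ^+ 3 / (1 + e) ^+ 2 = ((1+e)^+2 - (1-e)^+3) / (1+e)^+2.
  by field; lra.
by rewrite ler_pdivlMr.
Qed.

Lemma G3 e : 0 < e -> e <= 1/5 -> 2 * e + e * (1+e)^+2 * (1 - 2 * e) <= 1 - Z0 e.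
Proof.
move=> h1 h2; have := @F3 R e h1 h2; rewrite /Z0.
have hp : 0 < (1+e)^+2 by apply: exprn_gt0; lra.
have -> : 1 - (1 - e) ^+ 3 / (1 + e) ^+ 2 = ((1+e)^+2 - (1-e)^+3) / (1+e)^+2.
  by field; lra.
rewrite ler_pdivlMr // => H; apply: le_trans H; apply: eqle; ring.
Qed.

Lemma G2 e : 0 < e -> e <= 1/5 -> 4 * e * (1+e)^+2 <= (1 + 2 * e) / (1 + e).
Proof.
move=> h1 h2; have := @F2 R e h1 h2.
have hp : 0 < 1 + e by lra.
rewrite ler_pdivlMr // => H; apply: le_trans H; apply: eqle; ring.
Qed.

End Side.
Arguments Z0 {R} e.
Arguments E5 {R} e.

Section K.
Variable R : realFieldType.

Lemma key3 (e s g k r t E : R) : 0 < e -> e <= 1/5 -> 0 <= r -> 0 <= t -> t <= 2*e -> 0 <= E ->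
  2*e*(1+e)^+2 <= g -> 4*e*(1+e)^+2 <= k -> 2*e + e*(1+e)^+2*(1-2*e) <= g ->
  k * s = (1+2*e)*(1+e)^+2 -> 0 <= s ->
  2*e*(1+e)^+2*r*(1+2*r) <= (g - t + r*k)*(r + s*t/2 + E).
Proof.
move=> he he5 hr ht0 ht1 hE hg1 hk hg3 hks hs.
set Tg := 2*e*(1+e)^+2*r*(1+2*r).
have hq : 0 <= 2*e*(1+e)^+2 by apply: mulr_ge0; [lra| apply: sqr_ge0].
have hk0 : 0 <= k by nra.
have hrk : 0 <= r * k by apply: mulr_ge0.
have hF0 : Tg <= (g + r*k)*(r + E).
  have h1 : 0 <= (g + r*k) * E.
    apply: mulr_ge0 => //; lra.
  have h2 : 0 <= (g - 2*e*(1+e)^+2) * r by apply: mulr_ge0; lra.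
  have h3 : 0 <= (k - 4*e*(1+e)^+2) * (r*r) by apply: mulr_ge0; [lra| nra].
  rewrite /Tg; nra.
have hF2 : Tg <= (g - 2*e + r*k)*(r + s*e + E).
  have h0 : 0 <= g - 2 * e.
    have : 0 <= e*(1+e)^+2*(1-2*e).
      apply: mulr_ge0; [apply: mulr_ge0; [lra|apply: sqr_ge0]| lra].
    lra.
  have h1 : 0 <= (g - 2*e + r*k) * E by apply: mulr_ge0 => //; lra.
  have h1' : 0 <= (g - 2*e) * (s*e) by apply: mulr_ge0 => //; apply: mulr_ge0 => //; lra.
  have h2 : 0 <= (g - 2*e - e*(1+e)^+2*(1-2*e)) * r by apply: mulr_ge0; lra.
  have h3 : 0 <= (k - 4*e*(1+e)^+2) * (r*r) by apply: mulr_ge0; [lra| nra].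
  have hks' : r * k * (s * e) = r * ((1+2*e)*(1+e)^+2) * e.
    by rewrite -hks; ring.
  rewrite /Tg; nra.
have hid : 2*e*((g - t + r*k)*(r + s*t/2 + E)) =
   (2*e - t)*((g + r*k)*(r + E)) + t*((g - 2*e + r*k)*(r + s*e + E)) + e*s*t*(2*e-t).
  by field.
have : 2*e*Tg <= 2*e*((g - t + r*k)*(r + s*t/2 + E)).
  rewrite hid.
  have a1 : (2*e - t)*Tg <= (2*e - t)*((g + r*k)*(r + E)) by apply: ler_wpM2l; lra.
  have a2 : t*Tg <= t*((g - 2*e + r*k)*(r + s*e + E)) by apply: ler_wpM2l.
  have a3 : 0 <= e*s*t*(2*e-t) by apply: mulr_ge0; [apply: mulr_ge0; [nra|]|]; lra.
  lra.
by rewrite ler_pM2l //; lra.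
Qed.
End K.

Section S.
Variable R : realFieldType.

Lemma side (e r r' L u w x l : R) :
 0 < e -> e <= 1/5 -> 0 <= r -> r * (1+e) <= r' ->
 (1-e)/(1+e) <= L -> L <= 1 -> (1-e)^+2/(1+e) <= u -> u <= 1 -> 0 < w -> w <= 1 ->
 0 <= x -> x <= e -> x * (1 + 2*r') * w <= l -> l <= w * u * (x * (L + r) + 2*e*r) ->
 (1+e)^+3 * l <= r' + (1+e)^+3 * w * (L*u - Z0 e)/2 + E5 e.
Proof.
move=> he he5 hr hrr hL0 hL1 hu0 hu1 hw0 hw1 hx0 hx1 hl0 hl1.
have he1 : 0 < 1 + e by lra.
set s := (1+e)^+3.
have hs : 0 < s by apply: exprn_gt0.
have hL0' : 0 <= (1-e)/(1+e) by apply: divr_ge0; lra.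
have hu0' : 0 <= (1-e)^+2/(1+e) by apply: divr_ge0; [apply: sqr_ge0|lra].
have hz : Z0 e <= L*u.
  have -> : Z0 e = (1-e)/(1+e) * ((1-e)^+2/(1+e)) by rewrite /Z0; field; lra.
  by apply: ler_pM => //; lra.
have hE : 0 <= E5 e.
  rewrite /E5; have := @E5ge0 R e (ltW he) ltac:(lra); lra.
have hr' : 0 <= r'.
  have : 0 <= r*(1+e) by apply: mulr_ge0; lra.
  lra.
have hLp : 0 <= L by lra.
have hup : 0 <= u by lra.
have hA : x*(1+2*r') <= u*(x*(L+r)+2*e*r).
  have : x * (1 + 2*r') * w <= (u * (x * (L + r) + 2*e*r)) * w.
    apply: le_trans hl0 _; apply: le_trans hl1 _; apply: eqle; ring.
  by rewrite ler_pM2r.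
set T := r' + s*(L*u - Z0 e)/2 + E5 e.
have hT0 : 0 <= T.
  rewrite /T; have : 0 <= s * (L*u - Z0 e) by apply: mulr_ge0; lra.
  lra.
have hsr : s * r <= (1+e)^+2 * r'.
  have -> : s * r = (1+e)^+2 * (r * (1+e)) by rewrite /s exprS; ring.
  by apply: ler_wpM2l => //; apply: sqr_ge0.
suff hin : s*(u*(x*(L+r)+2*e*r)) <= T.
  have h1 : s * l <= w * (s*(u*(x*(L+r)+2*e*r))).
    apply: le_trans (_ : s * (w * u * (x * (L + r) + 2*e*r)) <= _).
      by apply: ler_wpM2l => //; lra.
    by apply: eqle; ring.
  have h2 : w * (s*(u*(x*(L+r)+2*e*r))) <= w * T by apply: ler_wpM2l => //; lra.
  apply: le_trans h1 _; apply: le_trans h2 _.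
  rewrite /T; have h3 : w * r' <= 1 * r' by apply: ler_wpM2r.
  have h4 : w * E5 e <= 1 * E5 e by apply: ler_wpM2r.
  have -> : w * (r' + s * (L * u - Z0 e) / 2 + E5 e) =
     w * r' + s * w * (L * u - Z0 e) / 2 + w * E5 e by ring.
  lra.
have hid : u*(x*(L+r)+2*e*r) = x*(u*(L+r)) + 2*e*r*u by ring.
rewrite hid.
have ha0 : 0 <= u*(L+r) by apply: mulr_ge0; lra.
have hur : u * r <= 1 * r by apply: ler_wpM2r.
have [hc1|hc2] := lerP (Z0 e + 2*e) (L*u).
- have h1 : x*(u*(L+r)) <= e*(L*u + r).
    have a1 : x*(u*(L+r)) <= e*(u*(L+r)) by apply: ler_wpM2r.
    apply: le_trans a1 _; apply: ler_wpM2l; lra.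
  have h2 : 2*e*r*u <= 2*e*r*1.
    apply: ler_wpM2l => //; apply: mulr_ge0 => //; lra.
  have h3 : s * (e * (L*u)) <= s * (L*u - Z0 e)/2.
    have hLu : L*u <= 1*1 by apply: ler_pM; lra.
    have : e * (L*u) <= e * 1 by apply: ler_wpM2l; lra.
    rewrite mulr1 => b.
    have c : e*(L*u) <= (L*u - Z0 e)/2 by lra.
    have := ler_wpM2l (ltW hs) c; move=> H; apply: le_trans H _; apply: eqle; ring.
  have h4 : 3 * e * (s * r) <= r'.
    have h5 := @F4 R e he he5.
    have a1 : 3 * e * (s * r) <= 3 * e * ((1+e)^+2 * r') by apply: ler_wpM2l => //; lra.
    have a2 : 3 * e * (1+e)^+2 * r' <= 1 * r' by apply: ler_wpM2r.
    apply: le_trans a1 _; rewrite mulrA; lra.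
  have h6 : s * (x * (u * (L + r)) + 2 * e * r * u) <= s * (e*(L*u) + 3*e*r).
    apply: ler_wpM2l; lra.
  apply: le_trans h6 _.
  have -> : s * (e*(L*u) + 3*e*r) = s * (e * (L*u)) + 3 * e * (s * r) by ring.
  rewrite /T; lra.
- set c := 1 + 2*r'.
  set a := u*(L+r).
  set g := 1 - L*u + r' * ((1+2*e)/(1+e)).
  have hca : g <= c - a.
    have : r <= r' / (1+e) by rewrite ler_pdivlMr.
    have hh : r' * ((1+2*e)/(1+e)) = 2 * r' - r'/(1+e) by field; lra.
    rewrite /g hh /a /c; lra.
  have hG1 := @G1 R e he he5.
  have hg0 : 0 < g.
    have : 0 <= r' * ((1 + 2 * e) / (1 + e)) by apply: mulr_ge0 => //; apply: divr_ge0; lra.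
    have := @F5 R e he.
    rewrite /g; lra.
  have k1 : s*(x*a + 2*e*r*u)*(c-a) <= 2*s*e*r*u*c.
    have h : x*(c-a) <= 2*e*r*u by rewrite /c /a; lra.
    have h' : x*(c-a)*a <= 2*e*r*u*a by apply: ler_wpM2r.
    have h'' : s*(x*(c-a)*a) <= s*(2*e*r*u*a) by apply: ler_wpM2l => //; lra.
    apply: le_trans (_ : s*(x*(c-a)*a) + s*(2*e*r*u*(c-a)) <= _).
      by apply: eqle; ring.
    apply: le_trans (_ : s*(2*e*r*u*a) + s*(2*e*r*u*(c-a)) <= _).
      by rewrite lerD2r.
    by apply: eqle; ring.
  have k2 : 2*s*e*r*u*c <= 2*e*(1+e)^+2*r'*c.
    have hc0 : 0 <= c by rewrite /c; lra.
    have hsr0 : 0 <= s*r by apply: mulr_ge0; lra.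
    have h : s*r*u <= s*r*1 by apply: ler_wpM2l.
    rewrite mulr1 in h.
    have h2 : 2*e*c*(s*r*u) <= 2*e*c*((1+e)^+2*r').
      apply: ler_wpM2l; [apply: mulr_ge0; lra|lra].
    apply: le_trans (_ : 2*e*c*(s*r*u) <= _); first by apply: eqle; ring.
    apply: le_trans h2 _; apply: eqle; ring.
  have k3 : 2*e*(1+e)^+2*r'*c <= g * T.
    have hG3 := @G3 R e he he5.
    have hG2 := @G2 R e he he5.
    have ht0 : 0 <= L*u - Z0 e by lra.
    have ht1 : L*u - Z0 e <= 2*e by lra.
    have hks : (1+2*e)/(1+e) * s = (1+2*e)*(1+e)^+2 by rewrite /s; field; lra.
    have := @key3 R e s (1 - Z0 e) ((1+2*e)/(1+e)) r' (L*u - Z0 e) (E5 e) he he5 hr'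
       ht0 ht1 hE hG1 hG2 hG3 hks (ltW hs).
    rewrite /c => H; apply: le_trans H _; rewrite /g /T; apply: eqle; ring.
  have k4 : g * T <= (c - a) * T by apply: ler_wpM2r.
  have hca0 : 0 < c - a by apply: lt_le_trans hca.
  have : s*(x*a + 2*e*r*u)*(c-a) <= T * (c - a).
    rewrite [T * _]mulrC; apply: le_trans k1 _; apply: le_trans k2 _.
    by apply: le_trans k3 _.
  by rewrite ler_pM2r.
Qed.
End S.

Section C.
Variable R : realFieldType.

Lemma combine (e r' L u w l2 l3 : R) : 0 < e -> e <= 1/5 ->
  (1-e)^+2/(1+e) <= u -> (1-e)^+2/(1+e) <= w ->
  (1+e)^+3 * l2 <= r' + (1+e)^+3 * w * (L*u - Z0 e)/2 + E5 e ->
  (1+e)^+3 * l3 <= r' + (1+e)^+3 * u * (L*w - Z0 e)/2 + E5 e ->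
  1 - 5*e - 2*r' <= (1+e)^+3 * (L*w*u - l2 - l3).
Proof.
move=> he he5 hu hw h2 h3.
have he1 : 0 < 1 + e by lra.
set s := (1+e)^+3.
have key : (1-e)^+5 <= s * Z0 e * (w + u) / 2.
  have hsz : s * Z0 e = (1+e) * (1-e)^+3 by rewrite /s /Z0; field; lra.
  rewrite hsz.
  have h5 : (1-e)^+5 = (1+e)*(1-e)^+3 * ((1-e)^+2/(1+e)) by field; lra.
  have hp : 0 <= (1+e)*(1-e)^+3.
    apply: mulr_ge0; [lra| apply: exprn_ge0; lra].
  have : (1+e)*(1-e)^+3 * ((1-e)^+2/(1+e)) <= (1+e)*(1-e)^+3 * ((w+u)/2).
    apply: ler_wpM2l => //; lra.
  rewrite -h5; move=> H; apply: le_trans H _; apply: eqle; ring.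
rewrite /E5 in h2 h3.
have : s * (L*w*u - l2 - l3) =
   s * L * w * u - s * l2 - s * l3 by ring.
move=> ->.
have e1 : s * w * (L*u - Z0 e)/2 + s * u * (L*w - Z0 e)/2 = s*L*w*u - s * Z0 e * (w+u)/2.
  by field.
set P5 := (1-e)^+5 in key h2 h3.
set Z := Z0 e in key h2 h3 e1.
set X1 := s * w * (L * u - Z) / 2 in h2 e1.
set X2 := s * u * (L * w - Z) / 2 in h3 e1.
set M := s * L * w * u in e1 *.
set W := s * Z * (w + u) / 2 in key e1.
rewrite -/s in h2 h3. lra.
Qed.

Lemma real_main (e dl p d23 A2 A3 n m D k2 lo2 k3 lo3 : R) :
  0 < e -> e <= 1/5 -> 0 < dl -> dl <= d23 -> 0 < p -> 0 < A2 -> 0 < A3 ->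
  (1-e)^+2 * A2 <= n -> n <= (1+e) * A2 ->
  (1-e)^+2 * A3 <= m -> m <= (1+e) * A3 ->
  (1-e) * (d23 * p) <= D -> D <= (1+e) * (d23 * p) ->
  0 <= k2 -> k2 <= e * n ->
  k2 * ((1 + 2*e/dl) * (1+e)^+2 * d23 * p * A3) <= lo2 ->
  lo2 <= k2 * (D + e * p) * m + 2 * e * (e * p) * n * m ->
  0 <= k3 -> k3 <= e * m ->
  k3 * ((1 + 2*e/dl) * (1+e)^+2 * d23 * p * A2) <= lo3 ->
  lo3 <= k3 * (D + e * p) * n + 2 * e * (e * p) * n * m ->
  (1 - 5*e - 2*e/dl) * (d23 * p * A2 * A3) <= D * n * m - lo2 - lo3.
Proof.
move=> he he5 hdl hdd hp hA2 hA3 hn0 hn1 hm0 hm1 hD0 hD1 hk20 hk21 hl20 hl21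
  hk30 hk31 hl30 hl31.
have he1 : 0 < 1 + e by lra.
have hd23 : 0 < d23 by lra.
have hq : 0 < (1-e)^+2 by apply: exprn_gt0; lra.
have hn : 0 < n by apply: lt_le_trans hn0; apply: mulr_gt0.
have hm : 0 < m by apply: lt_le_trans hm0; apply: mulr_gt0.
set U := (1+e)^+3 * d23 * p * A2 * A3.
have hU : 0 < U by rewrite /U; repeat apply: mulr_gt0 => //; apply: exprn_gt0.
set w := n / ((1+e)*A2).
set u := m / ((1+e)*A3).
set L := D / ((1+e)*(d23 * p)).
set r := e / ((1+e)*d23).
set r' := e / dl.
have hdp : 0 < d23 * p by apply: mulr_gt0.
have hp2 : 0 < (1+e)*A2 by apply: mulr_gt0.
have hp3 : 0 < (1+e)*A3 by apply: mulr_gt0.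
have hpd : 0 < (1+e)*(d23 * p) by apply: mulr_gt0.
have hr0 : 0 <= r by apply: divr_ge0; [lra| apply: mulr_ge0; lra].
have hrr : r * (1+e) <= r'.
  have -> : r * (1+e) = e / d23 by rewrite /r; field; apply/andP; split; lra.
  rewrite /r' ler_pdivrMr // mulrAC ler_pdivlMr //.
  by apply: ler_wpM2l; lra.
have divle : forall a b c : R, 0 < c -> a <= b -> a / c <= b / c.
  by move=> a b c hc hab; apply: ler_wpM2r => //; rewrite invr_ge0 ltW.
have hL0 : (1-e)/(1+e) <= L.
  have -> : (1-e)/(1+e) = ((1-e)*(d23 * p))/((1+e)*(d23 * p)).
    by field; apply/andP; split; rewrite gt_eqF //; lra.
  by apply: divle.
have hL1 : L <= 1 by rewrite /L ler_pdivrMr // mul1r.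
have hu0 : (1-e)^+2/(1+e) <= u.
  have -> : (1-e)^+2/(1+e) = ((1-e)^+2*A3)/((1+e)*A3).
    by field; apply/andP; split; rewrite gt_eqF //; lra.
  by apply: divle.
have hu1 : u <= 1 by rewrite /u ler_pdivrMr // mul1r.
have hw0 : (1-e)^+2/(1+e) <= w.
  have -> : (1-e)^+2/(1+e) = ((1-e)^+2*A2)/((1+e)*A2).
    by field; apply/andP; split; rewrite gt_eqF //; lra.
  by apply: divle.
have hw1 : w <= 1 by rewrite /w ler_pdivrMr // mul1r.
have hwp : 0 < w by rewrite /w divr_gt0.
have hup : 0 < u by rewrite /u divr_gt0.
set x2 := k2 / n.
set x3 := k3 / m.
have hx20 : 0 <= x2 by apply: divr_ge0; lra.
have hx30 : 0 <= x3 by apply: divr_ge0; lra.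
have hx21 : x2 <= e by rewrite /x2 ler_pdivrMr.
have hx31 : x3 <= e by rewrite /x3 ler_pdivrMr.
set l2 := lo2 / U.
set l3 := lo3 / U.
have hUi : 0 <= U^-1 by rewrite invr_ge0 ltW.
have s2a : x2 * (1 + 2*r') * w <= l2.
  have -> : x2 * (1 + 2*r') * w =
     k2 * ((1 + 2*e/dl) * (1+e)^+2 * d23 * p * A3) / U.
    rewrite /x2 /r' /w /U; field.
    by rewrite !gt_eqF //= ?(lt_trans _ hd23) //; lra.
  by apply: ler_wpM2r.
have s2b : l2 <= w * u * (x2 * (L + r) + 2*e*r).
  have -> : w * u * (x2 * (L + r) + 2*e*r) =
     (k2 * (D + e * p) * m + 2 * e * (e * p) * n * m) / U.
    rewrite /x2 /r /w /u /L /U; field.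
    by rewrite !gt_eqF //= ?(lt_trans _ hd23) //; lra.
  by apply: ler_wpM2r.
have s3a : x3 * (1 + 2*r') * u <= l3.
  have -> : x3 * (1 + 2*r') * u =
     k3 * ((1 + 2*e/dl) * (1+e)^+2 * d23 * p * A2) / U.
    rewrite /x3 /r' /u /U; field.
    by rewrite !gt_eqF //= ?(lt_trans _ hd23) //; lra.
  by apply: ler_wpM2r.
have s3b : l3 <= u * w * (x3 * (L + r) + 2*e*r).
  have -> : u * w * (x3 * (L + r) + 2*e*r) =
     (k3 * (D + e * p) * n + 2 * e * (e * p) * n * m) / U.
    rewrite /x3 /r /w /u /L /U; field.
    by rewrite !gt_eqF //= ?(lt_trans _ hd23) //; lra.
  by apply: ler_wpM2r.
have S2 := @side R _ _ _ _ _ _ _ _ he he5 hr0 hrr hL0 hL1 hu0 hu1 hwp hw1 hx20 hx21 s2a s2b.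
have S3 := @side R _ _ _ _ _ _ _ _ he he5 hr0 hrr hL0 hL1 hw0 hw1 hup hu1 hx30 hx31 s3a s3b.
have C := @combine _ _ _ _ _ _ _ he he5 hu0 hw0 S2 S3.
have hk : 0 < d23 * p * A2 * A3 by repeat apply: mulr_gt0.
have H := ler_wpM2r (ltW hk) C.
apply: le_trans (le_trans _ H) _; apply: eqle.
  by rewrite /r'; field; rewrite gt_eqF.
rewrite /L /w /u /l2 /l3 /U; field.
by rewrite !gt_eqF //= ?(lt_trans _ hd23) //; lra.
Qed.
End C.

Lemma tau_ok (R : realFieldType) (eps delta p d23 D A mm : R) :
  0 < eps -> 0 < delta -> delta <= d23 -> 0 < p -> 0 < A -> 0 <= mm ->
  mm <= (1+eps)*A -> 0 <= D -> D <= (1+eps)*(d23 * p) ->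
  (D + eps * p)*mm <= (1 + 2*eps/delta)*(1+eps)^+2*d23* p*A.
Proof.
move=> he hd hdd hp hA hmm hmm1 hD0 hD1.
have s1 : (D + eps * p)*mm <= ((1+eps)*(d23 * p) + eps * p)*((1+eps)*A).
  apply: ler_pM => //; first by apply: addr_ge0 => //; apply: mulr_ge0; lra.
  lra.
apply: le_trans s1 _.
set q := d23 / delta.
have hq : 1 <= q by rewrite /q ler_pdivlMr // mul1r.
have eq : (1 + 2*eps/delta)*(1+eps)^+2*d23* p*A =
   ((1+eps)*(d23 * p) + eps * p)*((1+eps)*A) + (1+eps)* p*A*eps*(2*q*(1+eps) - 1).
  by rewrite /q; field; rewrite gt_eqF.
rewrite eq lerDl; apply: mulr_ge0; last first.
  have : 1 <= q * (1 + eps) by rewrite -[1]mulr1; apply: ler_pM; lra.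
  lra.
apply: mulr_ge0; [apply: mulr_ge0; [apply: mulr_ge0|]|]; lra.
Qed.

Section Comb.
Variables (T : finType) (e : rel T).

Definition deg (Y : {set T}) (x : T) : nat := #|nbhd e x :&: Y|.

Lemma edgesE (X Y : {set T}) :
  edges_between e X Y = (\sum_(x in X) \sum_(y in Y) (e x y : nat))%N.
Proof.
rewrite /edges_between -sum1_card.
rewrite (eq_bigl (fun xy : T * T => (xy.1 \in X) && ((xy.2 \in Y) && e xy.1 xy.2))); last first.
  by case=> x y; rewrite !inE /= andbA.
rewrite -(pair_big_dep (fun x => x \in X) (fun x y => (y \in Y) && e x y) (fun _ _ => 1%N)) /=.
apply: eq_bigr => x _; rewrite big_mkcondr /=; apply: eq_bigr => y _.
by case: (e x y).
Qed.

Lemma degE (Y : {set T}) x : deg Y x = (\sum_(y in Y) (e x y : nat))%N.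
Proof.
rewrite /deg -sum1_card big_mkcond /= [RHS]big_mkcond /=; apply: eq_bigr => y _.
by rewrite !inE; case: (e x y); case: (y \in Y).
Qed.

Lemma edges_deg (X Y : {set T}) : edges_between e X Y = (\sum_(x in X) deg Y x)%N.
Proof. by rewrite edgesE; apply: eq_bigr => x _; rewrite degE. Qed.

Lemma edges_sym (X Y : {set T}) : symmetric e -> edges_between e X Y = edges_between e Y X.
Proof.
move=> hs; rewrite !edgesE exchange_big /=; apply: eq_bigr => y _; apply: eq_bigr => x _.
by rewrite hs.
Qed.

Lemma edgesU (X1 X2 Y : {set T}) : [disjoint X1 & X2] ->
  edges_between e (X1 :|: X2) Y = (edges_between e X1 Y + edges_between e X2 Y)%N.
Proof.
move=> d; rewrite !edges_deg (big_setID (A := X1 :|: X2) X1); congr addn.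
  by apply: eq_bigl => x; rewrite !inE; case: (x \in X1); case: (x \in X2).
apply: eq_bigl => x; rewrite !inE; case h1: (x \in X1) => /=.
  by rewrite (disjointFr d h1).
by [].
Qed.

Lemma edges_subl (X1 X2 Y : {set T}) : X1 \subset X2 ->
  (edges_between e X1 Y <= edges_between e X2 Y)%N.
Proof.
move=> s; rewrite !edges_deg [X in (_ <= X)%N](big_setID (A := X2) X1) /= (setIidPr s).
exact: leq_addr.
Qed.

Lemma edges_subr (X Y1 Y2 : {set T}) : Y1 \subset Y2 ->
  (edges_between e X Y1 <= edges_between e X Y2)%N.
Proof.
move=> s; rewrite !edges_deg; apply: leq_sum => x _; rewrite /deg.
by apply: subset_leq_card; apply: setIS.
Qed.

End Comb.
Arguments deg {T} e Y x.

Section More.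
Variables (T : finType) (e : rel T).
Lemma edges_split (X B Y : {set T}) : B \subset X ->
  edges_between e X Y = (edges_between e B Y + edges_between e (X :\: B) Y)%N.
Proof.
move=> s; rewrite !edges_deg (big_setID (A := X) B) (setIidPr s) //.
Qed.
End More.

Section Side2.
Variables (R : realFieldType) (T : finType) (e : rel T).

Lemma edgesR (X Y : {set T}) :
  (edges_between e X Y)%:R = \sum_(x in X) ((deg e Y x)%:R : R).
Proof. by rewrite edges_deg natr_sum. Qed.

Lemma sum_const_le (A : {set T}) (F : T -> R) (c : R) :
  (forall x, x \in A -> c <= F x) -> #|A|%:R * c <= \sum_(x in A) F x.
Proof.
move=> h; rewrite mulr_natl -(sumr_const (mem A) c); apply: ler_sum => x xA; exact: h.
Qed.

Lemma sum_const_ge (A : {set T}) (F : T -> R) (c : R) :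
  (forall x, x \in A -> F x <= c) -> \sum_(x in A) F x <= #|A|%:R * c.
Proof.
move=> h; rewrite mulr_natl -(sumr_const (mem A) c); apply: ler_sum => x xA; exact: h.
Qed.

Lemma sum_const_lt (A : {set T}) (F : T -> R) (c : R) : (0 < #|A|)%N ->
  (forall x, x \in A -> F x < c) -> \sum_(x in A) F x < #|A|%:R * c.
Proof.
move=> /card_gt0P [x0 x0A] h; rewrite mulr_natl -(sumr_const (mem A) c); apply: ltr_sum.
  by apply/hasP; exists x0 => //; rewrite mem_index_enum.
by move=> x xA; exact: h.
Qed.

Lemma sum_const_gt (A : {set T}) (F : T -> R) (c : R) : (0 < #|A|)%N ->
  (forall x, x \in A -> c < F x) -> #|A|%:R * c < \sum_(x in A) F x.
Proof.
move=> /card_gt0P [x0 x0A] h; rewrite mulr_natl -(sumr_const (mem A) c); apply: ltr_sum.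
  by apply/hasP; exists x0 => //; rewrite mem_index_enum.
by move=> x xA; exact: h.
Qed.

Lemma natA1 (a K n : nat) : (1 <= K)%N -> (a + K.-1 < n)%N -> (a + K <= n)%N.
Proof. lia. Qed.

Lemma natA2 (n K k c l b : nat) : (l + K <= n)%N -> (c <= b)%N -> (b <= k + l)%N ->
  (K - k <= n - c)%N.
Proof. lia. Qed.

Lemma comb_side (X Y : {set T}) (eps eta Dd tau : R) :
  0 < eps -> eps < 1/2 -> 0 <= eta -> (0 < #|X|)%N -> (0 < #|Y|)%N ->
  (forall X' : {set T}, X' \subset X -> eps * #|X|%:R <= #|X'|%:R -> `|Dd - density e X' Y| <= eta) ->
  (Dd + eta) * #|Y|%:R <= tau ->
  let B := [set x in X | tau < (deg e Y x)%:R] in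
  [/\ #|B|%:R <= eps * #|X|%:R,
      #|B|%:R * tau <= (edges_between e B Y)%:R &
      (edges_between e B Y)%:R <= #|B|%:R * (Dd + eta) * #|Y|%:R
                                   + 2 * eps * eta * #|X|%:R * #|Y|%:R].
Proof.
move=> he he2 heta hX hY hreg htau B.
set n := #|X|; set m := #|Y|.
have hn : (0 : R) < n%:R by rewrite ltr0n.
have hm : (0 : R) < m%:R by rewrite ltr0n.
have hen : 0 < eps * n%:R by apply: mulr_gt0.
have hreg2 : forall X' : {set T}, X' \subset X -> eps * n%:R <= #|X'|%:R ->
    (Dd - eta) * #|X'|%:R * m%:R <= (edges_between e X' Y)%:R /\
    (edges_between e X' Y)%:R <= (Dd + eta) * #|X'|%:R * m%:R.
  move=> X' sX' hX'.
  have hx' : (0:R) < #|X'|%:R by apply: lt_le_trans hX'.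
  have hq : (0:R) < #|X'|%:R * m%:R by apply: mulr_gt0.
  have := hreg X' sX' hX'; rewrite /density natrM -/m => /ler_normlP [h1 h2].
  split.
  - have : Dd - eta <= (edges_between e X' Y)%:R / (#|X'|%:R * m%:R) by lra.
    by rewrite ler_pdivlMr // mulrA.
  - have : (edges_between e X' Y)%:R / (#|X'|%:R * m%:R) <= Dd + eta by lra.
    by rewrite ler_pdivrMr // mulrA.
have hBX : B \subset X by apply/subsetP => x; rewrite inE => /andP[].
have ha : #|B|%:R <= eps * n%:R.
  rewrite leNgt; apply/negP => hlt.
  have hB0 : (0 < #|B|)%N by rewrite -(ltr0n R); apply: lt_trans hlt.
  have [_ h2] := hreg2 B hBX (ltW hlt).
  have h3 : #|B|%:R * tau < (edges_between e B Y)%:R.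
    rewrite edgesR; apply: sum_const_gt => // x; rewrite inE => /andP[].
    by [].
  have h4 : (Dd + eta) * #|B|%:R * m%:R <= #|B|%:R * tau.
    rewrite mulrAC [_ * tau]mulrC; apply: ler_wpM2r => //; exact: ler0n.
  lra.
have hb : #|B|%:R * tau <= (edges_between e B Y)%:R.
  rewrite edgesR; apply: sum_const_le => x; rewrite inE => /andP[_ h]; exact: ltW.
split => //.
set k := #|B|.
have [k0|kpos] := eqVneq k 0%N.
  have -> : B = set0 by apply/eqP; rewrite -cards_eq0 -/k k0.
  rewrite edgesR big_set0 k0 mul0r mul0r add0r.
  apply: mulr_ge0; last exact: ler0n.
  apply: mulr_ge0; last exact: ler0n.
  by apply: mulr_ge0 => //; apply: mulr_ge0; lra.
have k1 : (1 <= k)%N by rewrite lt0n.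
set L := [set x in X | (deg e Y x)%:R < (Dd - eta) * m%:R].
have hLX : L \subset X by apply/subsetP => x; rewrite inE => /andP[].
have hL : #|L|%:R < eps * n%:R.
  rewrite ltNge; apply/negP => hle.
  have hL0 : (0 < #|L|)%N by rewrite -(ltr0n R); apply: lt_le_trans hle.
  have [h1 _] := hreg2 L hLX hle.
  have h3 : (edges_between e L Y)%:R < #|L|%:R * ((Dd - eta) * m%:R).
    rewrite edgesR; apply: sum_const_lt => // x; rewrite inE => /andP[].
    by [].
  have : (Dd - eta) * #|L|%:R * m%:R = #|L|%:R * ((Dd - eta) * m%:R) by ring.
  lra.
have hex : exists K : nat, eps * n%:R <= K%:R.
  exists n; rewrite -[X in _ <= X]mul1r; apply: ler_wpM2r; [exact: ler0n| lra].
case: (ex_minnP hex) => K hK hmin.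
have K1 : (1 <= K)%N.
  rewrite lt0n; apply/negP => /eqP K0; move: hK; rewrite K0; lra.
have hKm1 : (K.-1)%:R < eps * n%:R.
  rewrite ltNge; apply/negP => h; move: (hmin _ h); case: (K) K1 => // K' _ /=.
  by rewrite ltnn.
have hkK : (k <= K)%N by rewrite -(ler_nat R); apply: le_trans hK.
have hLK : (#|L| + K <= n)%N.
  have : (#|L| + K.-1)%:R < (n%:R : R).
    rewrite natrD; have : 2 * (eps * n%:R) < n%:R by nra.
    lra.
  rewrite ltr_nat; exact: natA1.
set C := X :\: (B :|: L).
have hC : (K - k <= #|C|)%N.
  have h1 : #|C| = (n - #|X :&: (B :|: L)|)%N by rewrite cardsD.
  have h2 : (#|X :&: (B :|: L)| <= #|B :|: L|)%N by apply: subset_leq_card; apply: subsetIr.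
  have h3 : (#|B :|: L| <= k + #|L|)%N by rewrite cardsU; apply: leq_subr.
  rewrite h1; exact: natA2 h2 h3.
have [s [us ss sC]] := card_geqP hC.
set S := [set x in s].
have hS : #|S| = (K - k)%N by rewrite cardsE (card_uniqP us) ss.
have hSC : S \subset C by apply/subsetP => x; rewrite inE => /sC.
have hdis : [disjoint B & S].
  apply/pred0P => x /=; apply/negbTE/negP => /andP [xB xS].
  by move/subsetP: hSC => /(_ x xS); rewrite in_setD in_setU xB.
have hX' : B :|: S \subset X.
  rewrite subUset hBX /=; apply: subset_trans hSC _; exact: subsetDl.
have hcX' : #|B :|: S| = K.
  rewrite cardsU (disjoint_setI0 hdis) cards0 subn0 hS; exact: subnKC.
have [_ hup] := hreg2 (B :|: S) hX' ltac:(by rewrite hcX').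
rewrite hcX' edgesU // natrD in hup.
have hSlow : (K - k)%:R * ((Dd - eta) * m%:R) <= (edges_between e S Y)%:R.
  rewrite -hS edgesR; apply: sum_const_le => x xS.
  move/subsetP: hSC => /(_ x xS); rewrite in_setD in_setU negb_or => /andP[/andP[_ xL] xX].
  by move: xL; rewrite inE xX /= -leNgt.
rewrite natrB // in hSlow.
have hK2 : (K%:R : R) <= eps * n%:R + k%:R.
  have : (K%:R : R) = (K.-1)%:R + 1 by case: (K) K1 => // K1 _ /=; rewrite natr1.
  have : (1 : R) <= k%:R by rewrite ler1n.
  lra.
have h5 : 2 * eta * K%:R * m%:R <= 2 * eta * (eps * n%:R + k%:R) * m%:R.
  apply: ler_wpM2r; first exact: ler0n.
  by apply: ler_wpM2l => //; lra.
have : (Dd + eta) * K%:R * m%:R - (K%:R - k%:R) * ((Dd - eta) * m%:R) =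
   k%:R * (Dd - eta) * m%:R + 2 * eta * K%:R * m%:R by ring.
have : 2 * eta * (eps * n%:R + k%:R) * m%:R =
   2 * eps * eta * n%:R * m%:R + 2 * eta * k%:R * m%:R by ring.
have : k%:R * (Dd + eta) * m%:R = k%:R * (Dd - eta) * m%:R + 2 * eta * k%:R * m%:R by ring.
lra.
Qed.

End Side2.

Lemma dens_sym (R : realFieldType) (T : finType) (e : rel T) (X Y : {set T}) :
  symmetric e -> density e X Y = (density e Y X : R).
Proof. by move=> hs; rewrite /density edges_sym // mulnC. Qed.

Theorem proposition2p14 (R : realFieldType) (T : finType) (e : rel T)
  (e_sym : symmetric e) (e_irr : irreflexive e)
  (eps delta p : R) (V1 V2 V3 : {set T}) (d12 d13 d23 : R) :
  0 < eps -> 0 < delta -> 0 < p -> eps < 1 / 2 ->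
  [disjoint V1 & V2] -> [disjoint V1 & V3] -> [disjoint V2 & V3] ->
  density e V1 V2 = d12 * p -> density e V1 V3 = d13 * p ->
  density e V2 V3 = d23 * p ->
  delta <= d12 -> delta <= d13 -> delta <= d23 ->
  forall v : T, v \in V1 -> typical e eps p d12 d13 d23 V2 V3 v ->
  exists N2 N3 : {set T},
    [/\ N2 \subset nbhd e v :&: V2, N3 \subset nbhd e v :&: V3,
        (* (i) *)
        (1 - 6%:R * eps - 2%:R * eps / delta) * d12 * d13 * d23 * p ^+ 3
          * #|V2|%:R * #|V3|%:R <= (edges_between e N2 N3)%:R,
        (good_vertex e eps p d12 d13 d23 V1 V2 V3 v ->
          (1 - 6%:R * eps - 2%:R * eps / delta) * d12 * d13 * d23 * p ^+ 3
            * #|V2|%:R * #|V3|%:R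
          <= (good_edges_between e eps p d12 d13 V1 V2 V3 N2 N3)%:R) &
        (* (ii) *)
        ((forall x, x \in N2 ->
          #|nbhd e x :&: N3|%:R <=
            (1 + 2%:R * eps / delta) * (1 + eps) ^+ 2 * d13 * d23 * p ^+ 2 * #|V3|%:R) /\
        (forall y, y \in N3 ->
          #|nbhd e y :&: N2|%:R <=
            (1 + 2%:R * eps / delta) * (1 + eps) ^+ 2 * d12 * d23 * p ^+ 2 * #|V2|%:R))].
Proof.
move=> he hdl hp he2 _ _ _ _ _ _ hdl12 hdl13 hdl23 v _ htyp.
move: htyp; rewrite /typical /=.
set N2 := nbhd e v :&: V2; set N3 := nbhd e v :&: V3.
move=> [ha [hb [N2' [N3' [s2 s3 hn hm [hreg hD]]]]]].
move: ha hb hD; rewrite /approx => /andP[ha1 ha2] /andP[hb1 hb2] /andP[hD1 hD2].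
set n := #|N2'| in hn hreg *; set m := #|N3'| in hm hreg *.
set a := #|N2| in ha1 ha2 hn; set b := #|N3| in hb1 hb2 hm.
set D' := density e N2' N3' in hD1 hD2 hreg.
have hd23 : 0 < d23 by lra.
have hdp : 0 < d23 * p by apply: mulr_gt0.
have hDpos : 0 < D'.
  have : 0 < (1 - eps) * (d23 * p) by apply: mulr_gt0; lra.
  lra.
have hn0 : (0 < n)%N.
  rewrite lt0n; apply/negP => /eqP n0; move: hDpos; rewrite /D' /density -/n n0 mul0n.
  by rewrite invr0 mulr0 ltxx.
have hm0 : (0 < m)%N.
  rewrite lt0n; apply/negP => /eqP m0; move: hDpos; rewrite /D' /density -/m m0 muln0.
  by rewrite invr0 mulr0 ltxx.
have hnR : (0 : R) < n%:R by rewrite ltr0n.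
have hmR : (0 : R) < m%:R by rewrite ltr0n.
have hE : (edges_between e N2' N3')%:R = D' * n%:R * m%:R.
  rewrite /D' /density -/n -/m natrM; field; rewrite ?gt_eqF //.
have hna : (n <= a)%N by apply: subset_leq_card.
have hmb : (m <= b)%N by apply: subset_leq_card.
have hnaR : (n%:R : R) <= a%:R by rewrite ler_nat.
have hmbR : (m%:R : R) <= b%:R by rewrite ler_nat.
set A2 := d12 * p * #|V2|%:R.
set A3 := d13 * p * #|V3|%:R.
rewrite -/A2 in ha1 ha2; rewrite -/A3 in hb1 hb2.
have hA2 : 0 < A2.
  have : 0 < (1 + eps) * A2.
    apply: lt_le_trans ha2; apply: lt_le_trans hnaR; exact: hnR.
  by rewrite pmulr_rgt0 //; lra.
have hA3 : 0 < A3.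
  have : 0 < (1 + eps) * A3.
    apply: lt_le_trans hb2; apply: lt_le_trans hmbR; exact: hmR.
  by rewrite pmulr_rgt0 //; lra.
set tau2 := (1 + 2%:R * eps / delta) * (1 + eps) ^+ 2 * d13 * d23 * p ^+ 2 * #|V3|%:R.
set tau3 := (1 + 2%:R * eps / delta) * (1 + eps) ^+ 2 * d12 * d23 * p ^+ 2 * #|V2|%:R.
have htau2' : tau2 = (1 + 2*eps/delta) * (1+eps)^+2 * d23 * p * A3 by rewrite /tau2 /A3; ring.
have htau3' : tau3 = (1 + 2*eps/delta) * (1+eps)^+2 * d23 * p * A2 by rewrite /tau3 /A2; ring.
have hD0 : 0 <= D' by lra.
have hnR1 : n%:R <= (1 + eps) * A2 by apply: le_trans hnaR ha2.
have hmR1 : m%:R <= (1 + eps) * A3 by apply: le_trans hmbR hb2.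
have ht2 : (D' + eps * p) * m%:R <= tau2.
  rewrite htau2'; apply: tau_ok => //; exact: ler0n.
have ht3 : (D' + eps * p) * n%:R <= tau3.
  rewrite htau3'; apply: tau_ok => //; exact: ler0n.
have hep : 0 <= eps * p by apply: mulr_ge0; lra.
have hreg2 : forall X' : {set T}, X' \subset N2' -> eps * n%:R <= #|X'|%:R ->
    `|D' - density e X' N3'| <= eps * p.
  move=> X' sX' hX'; apply: hreg => //.
  rewrite -[X in _ <= X]mul1r; apply: ler_wpM2r; [exact: ler0n| lra].
have hreg3 : forall Y' : {set T}, Y' \subset N3' -> eps * m%:R <= #|Y'|%:R ->
    `|D' - density e Y' N2'| <= eps * p.
  move=> Y' sY' hY'; rewrite -dens_sym //; apply: hreg => //.
  rewrite -[X in _ <= X]mul1r; apply: ler_wpM2r; [exact: ler0n| lra].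
have := @comb_side R T e N2' N3' eps (eps * p) D' tau2 he he2 hep hn0 hm0 hreg2 ht2.
move=> /= [ka kb kc].
have := @comb_side R T e N3' N2' eps (eps * p) D' tau3 he he2 hep hm0 hn0 hreg3 ht3.
move=> /= [la lb lc].
set B2 := [set x in N2' | tau2 < (deg e N3' x)%:R] in ka kb kc.
set B3 := [set x in N3' | tau3 < (deg e N2' x)%:R] in la lb lc.
set N2'' := N2' :\: B2.
set N3'' := N3' :\: B3.
have hB2 : B2 \subset N2' by apply/subsetP => x; rewrite inE => /andP[].
have hB3 : B3 \subset N3' by apply/subsetP => x; rewrite inE => /andP[].
have sN2 : N2'' \subset N2 by apply: subset_trans s2; exact: subsetDl.
have sN3 : N3'' \subset N3 by apply: subset_trans s3; exact: subsetDl.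
have hdec : (edges_between e N2' N3' <=
   edges_between e B2 N3' + edges_between e B3 N2' + edges_between e N2'' N3'')%N.
  rewrite (@edges_split _ e _ _ _ hB2).
  have h1 : edges_between e N2'' N3' =
     (edges_between e N2'' B3 + edges_between e N2'' N3'')%N.
    rewrite edges_sym // (@edges_split _ e _ _ _ hB3) edges_sym // [edges_between e N3'' _]edges_sym //.
  have h2 : (edges_between e N2'' B3 <= edges_between e B3 N2')%N.
    rewrite edges_sym //; apply: edges_subr; exact: subsetDl.
  rewrite h1; move: h2.
  set a1 := edges_between _ B2 N3'; set a2 := edges_between _ N2'' B3.
  set a3 := edges_between _ B3 N2'; set a4 := edges_between _ N2'' N3''.
  move=> h2; rewrite -addnA leq_add2l leq_add2r //.
have hdecR : D' * n%:R * m%:R - (edges_between e B2 N3')%:R - (edges_between e B3 N2')%:R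
    <= (edges_between e N2'' N3'')%:R.
  rewrite -hE; have := hdec; rewrite -(ler_nat R) !natrD; lra.
set DD := d23 * p * A2 * A3.
have hDD : 0 < DD by apply: mulr_gt0 => //; apply: mulr_gt0 => //; apply: mulr_gt0.
set Q := (1 - 5 * eps - 2 * eps / delta) * DD.
have hQ : Q <= (edges_between e N2'' N3'')%:R.
  have [he5|he5] := lerP eps (1/5).
    apply: le_trans hdecR.
    have f1 : (1-eps)^+2 * A2 <= n%:R.
      have : (1-eps)^+2 * A2 = (1 - eps) * ((1 - eps) * A2) by ring.
      move=> ->; apply: (le_trans _ hn); apply: ler_wpM2l; lra.
    have f2 : (1-eps)^+2 * A3 <= m%:R.
      have : (1-eps)^+2 * A3 = (1 - eps) * ((1 - eps) * A3) by ring.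
      move=> ->; apply: (le_trans _ hm); apply: ler_wpM2l; lra.
    have f3 : #|B2|%:R * ((1 + 2*eps/delta) * (1+eps)^+2 * d23 * p * A3)
        <= (edges_between e B2 N3')%:R by rewrite -htau2'.
    have f4 : #|B3|%:R * ((1 + 2*eps/delta) * (1+eps)^+2 * d23 * p * A2)
        <= (edges_between e B3 N2')%:R by rewrite -htau3'.
    have f5 : (edges_between e B3 N2')%:R <= #|B3|%:R * (D' + eps * p) * n%:R
        + 2 * eps * (eps * p) * n%:R * m%:R.
      by apply: le_trans lc _; apply: eqle; ring.
    exact: (@real_main R eps delta p d23 A2 A3 n%:R m%:R D' _ _ _ _ he he5 hdl hdl23 hp
      hA2 hA3 f1 hnR1 f2 hmR1 hD1 hD2 (ler0n _ _) ka f3 kc (ler0n _ _) la f4 f5).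
  have : 1 - 5 * eps - 2 * eps / delta <= 0.
    have : 0 <= 2 * eps / delta by apply: divr_ge0; lra.
    lra.
  move=> h; apply: le_trans (_ : 0 <= _); last exact: ler0n.
  rewrite /Q; apply: mulr_le0_ge0 => //; lra.
have hDDe : (1 - 6%:R * eps - 2%:R * eps / delta) * d12 * d13 * d23 * p ^+ 3
          * #|V2|%:R * #|V3|%:R = Q - eps * DD.
  by rewrite /Q /DD /A2 /A3; ring.
have hepsDD : 0 <= eps * DD by apply: mulr_ge0; lra.
exists N2'', N3''; split => //.
- rewrite hDDe; lra.
- move=> [_ hbad]; rewrite hDDe.
  set G := [set xy in setX N2'' N3'' | e xy.1 xy.2 &&
              good_edge e eps p d12 d13 V1 V2 V3 xy.1 xy.2].
  set Bd := [set xy in setX N2 N3 | e xy.1 xy.2 &&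
              ~~ good_edge e eps p d12 d13 V1 V2 V3 xy.1 xy.2].
  have hbad' : (#|Bd|%:R : R) <= eps * DD.
    apply: le_trans hbad _; apply: eqle; rewrite /DD /A2 /A3; ring.
  clearbody N2'' N3'' N2 N3.
  have hsub : [set xy in setX N2'' N3'' | e xy.1 xy.2] \subset G :|: Bd.
    apply/subsetP => -[x y]; rewrite in_set in_setX /= => /andP[/andP[hx hy] hxy].
    rewrite in_setU /G /Bd !in_set /=.
    case: (good_edge e eps p d12 d13 V1 V2 V3 x y); rewrite hx hy hxy //=.
    by rewrite (subsetP sN2 x hx) (subsetP sN3 y hy).
  have hc : (edges_between e N2'' N3'' <= #|G| + #|Bd|)%N.
    apply: leq_trans (subset_leq_card hsub) _; rewrite cardsU; exact: leq_subr.
  have hcR : (edges_between e N2'' N3'')%:R <= (#|G|%:R : R) + #|Bd|%:R.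
    by rewrite -natrD ler_nat.
  rewrite /good_edges_between -/G; lra.
- split.
  + move=> x; rewrite in_setD => /andP[xB xN].
    have hx : (deg e N3' x)%:R <= tau2.
      by move: xB; rewrite inE xN /= -leNgt.
    apply: le_trans hx; rewrite ler_nat /deg; apply: subset_leq_card.
    apply: setIS; exact: subsetDl.
  + move=> y; rewrite in_setD => /andP[yB yN].
    have hy : (deg e N2' y)%:R <= tau3.
      by move: yB; rewrite inE yN /= -leNgt.
    apply: le_trans hy; rewrite ler_nat /deg; apply: subset_leq_card.
    apply: setIS; exact: subsetDl.
Qed.
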